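(* Fix a point $(\xi^1,\xi^2)$ with a symmetric positive definite matrix $g_{\alpha\beta}$ ($\alpha,\beta\in\{1,2\}$), $g=\det(g_{\alpha\beta})$, inverse $g^{\alpha\beta}$. Let $P=P(\rho,e)$ be a smooth pressure law and consider the state vector $U=(\rho,v^1,v^2,V^3,e)^T$ with $\rho>0$, $E=e+\tfrac12\left(g_{\alpha\beta}v^\alpha v^\beta+(V^3)^2\right)$ and $q_c^2=g_{\alpha\beta}v^\alpha v^\beta$. For $\alpha=1,2$ let $A^\alpha$ be the $5\times5$ Jacobian matrix with respect to $U$ (with $g_{\alpha\beta}$ held fixed) of the flux $$F^\alpha(U)=\Big(\rho\sqrt g\,v^\alpha,\ \sqrt g[\rho v^1v^\alpha+g^{1\alpha}P],\ \sqrt g[\rho v^2v^\alpha+g^{2\alpha}P],\ \rho\sqrt g\,V^3v^\alpha,\ \sqrt g[\rho E+P]v^\alpha\Big)^T.$$ Assume $PP_e+\rho^2P_\rho>0$ and let $c=\frac{\sqrt{PP_e+\rho^2P_\rho}}{\rho}$. At a state where $A^1$ is invertible, the eigenvalues of $\bar A=(A^1)^{-1}A^2$ are $$\frac{v^2}{v^1},\ \frac{v^2}{v^1},\ \frac{v^2}{v^1},\ \frac{v^1v^2-c^2g^{12}\mp\frac{c}{\sqrt g}\sqrt{q_c^2-c^2}}{(v^1)^2-g^{11}c^2}.$$ Consequently the system $A^1U_{\xi^1}+A^2U_{\xi^2}+S=0$ (treating $\xi^1$ as time-like) is never strictly hyperbolic; it is (non-strictly) hyperbolic where $q_c>c$ and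 elliptic where $q_c<c$.
   Context: For a first-order system $U_t+\sum_i\bar A^iU_{x^i}+\bar S=0$, it is called strictly hyperbolic if for every unit vector $w$ the eigenvalues of $\sum_i w_i\bar A^i$ are real and distinct, non-strictly hyperbolic if they are all real but not all distinct, and elliptic if some eigenvalue is complex (non-real). For the steady system $A^1U_{\xi^1}+A^2U_{\xi^2}+S=0$, $\xi^1$ is treated as the time-like variable, so the relevant matrix is $\bar A=(A^1)^{-1}A^2$. $P_\rho,P_e$ denote partial derivatives of the pressure law. These are the steady conical Euler equations projected on the unit sphere, with $v^\alpha$ rescaled crossflow velocity components and $V^3$ the radial velocity. *)

(* Defs.v *)
From HB Require Import structures.
From mathcomp Require Import all_boot all_order all_algebra.
From mathcomp Require Import all_classical all_reals.
From mathcomp Require Import topology normedtype derive.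
From mathcomp Require Import complex.

Set Implicit Arguments.
Unset Strict Implicit.
Unset Printing Implicit Defensive.

Import Order.TTheory GRing.Theory Num.Theory.
Import numFieldNormedType.Exports.
Local Open Scope ring_scope.
Local Open Scope complex_scope.

Section ConicalEuler.
Variable R : realType.

Definition sym_posdef (G : 'M[R]_2) : Prop :=
  G^T = G /\ forall x : 'rV[R]_2, x != 0 -> 0 < (x *m G *m x^T) 0 0.

Definition pt (r e : R) : 'rV[R]_2 := \row_(k < 2) (if k == ord0 then r else e).

Definition P_rho (P : 'rV[R]_2 -> R) (r e : R) : R := 'D_(delta_mx 0 0) P (pt r e).
Definition P_e (P : 'rV[R]_2 -> R) (r e : R) : R := 'D_(delta_mx 0 1) P (pt r e).

Definition rho_of (U : 'rV[R]_5) : R := U 0 (inord 0).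
Definition v_of (U : 'rV[R]_5) (a : 'I_2) : R := U 0 (inord a.+1).
Definition V3_of (U : 'rV[R]_5) : R := U 0 (inord 3).
Definition e_of (U : 'rV[R]_5) : R := U 0 (inord 4).

Definition qc2 (G : 'M[R]_2) (U : 'rV[R]_5) : R :=
  \sum_(a < 2) \sum_(b < 2) G a b * v_of U a * v_of U b.

Definition Etot (G : 'M[R]_2) (U : 'rV[R]_5) : R :=
  e_of U + 2^-1 * (qc2 G U + V3_of U ^+ 2).

Definition flux (G : 'M[R]_2) (P : 'rV[R]_2 -> R) (a : 'I_2)
    (U : 'rV[R]_5) : 'rV[R]_5 :=
  let sg := Num.sqrt (\det G) in
  let Gi := invmx G in
  let r := rho_of U in
  let p := P (pt r (e_of U)) in
  let va := v_of U a in
  \row_(i < 5)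
    [:: r * sg * va;
        sg * (r * v_of U 0 * va + Gi 0 a * p);
        sg * (r * v_of U 1 * va + Gi 1 a * p);
        r * sg * V3_of U * va;
        sg * (r * Etot G U + p) * va]`_i.

(* A^alpha : the usual 5x5 Jacobian matrix (entry (i,j) = dF_i/dU_j).
   MathComp-Analysis' [jacobian] uses the row-vector convention
   ('D_v f a = v *m jacobian f a), hence the transpose. *)
Definition Amat (G : 'M[R]_2) (P : 'rV[R]_2 -> R) (a : 'I_2) (U : 'rV[R]_5)
  : 'M[R]_5 := (jacobian (flux G P a) U)^T.

Definition Abar (G : 'M[R]_2) (P : 'rV[R]_2 -> R) (U : 'rV[R]_5) : 'M[R]_5 :=
  invmx (Amat G P 0 U) *m Amat G P 1 U.

Definition sound_speed (P : 'rV[R]_2 -> R) (U : 'rV[R]_5) : R :=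
  let r := rho_of U in let e := e_of U in
  Num.sqrt (P (pt r e) * P_e P r e + r ^+ 2 * P_rho P r e) / r.

Definition cmx n (M : 'M[R]_n) : 'M[R[i]]_n := map_mx (fun x => x%:C) M.
Definition is_eigenvalue n (M : 'M[R]_n) (z : R[i]) : Prop :=
  root (char_poly (cmx M)) z.

(* Hyperbolicity of a 1-d (time-like xi^1) first-order system with matrix M:
   w ranges over unit vectors of R^1, i.e. w = +-1. *)
Definition all_eig_real n (M : 'M[R]_n) : Prop :=
  forall z, is_eigenvalue M z -> Im z = 0.
Definition eig_distinct n (M : 'M[R]_n) : Prop :=
  forall z, is_eigenvalue M z -> ~~ ((('X - z%:P) ^+ 2) %| char_poly (cmx M)).

Definition strictly_hyperbolic n (M : 'M[R]_n) : Prop :=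
  forall w : R, `|w| = 1 -> all_eig_real (w *: M) /\ eig_distinct (w *: M).
Definition nonstrictly_hyperbolic n (M : 'M[R]_n) : Prop :=
  forall w : R, `|w| = 1 -> all_eig_real (w *: M) /\ ~ eig_distinct (w *: M).
Definition elliptic n (M : 'M[R]_n) : Prop :=
  exists w : R, `|w| = 1 /\ exists z, is_eigenvalue (w *: M) z /\ Im z != 0.

End ConicalEuler.

(* Main.v *)
Require Import Defs.
From HB Require Import structures.
From mathcomp Require Import all_boot all_order all_algebra.
From mathcomp Require Import all_classical all_reals.
From mathcomp Require Import topology normedtype derive.
From mathcomp Require Import complex.
From mathcomp Require Import ring lra.
Import Order.TTheory GRing.Theory Num.Theory.
Import numFieldNormedType.Exports.
Local Open Scope ring_scope.
Local Open Scope complex_scope.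
Section G2.
Variable F : comRingType.
Lemma matE n (A : 'M[F]_n.+1) : A = \matrix_(i, j) A (inord i) (inord j).
Proof. by apply/matrixP => i j; rewrite mxE !inord_val. Qed.
Local Notation "A `_( i , j )" := (A (inord i) (inord j)) (at level 3).
Lemma det2 (A : 'M[F]_2) : \det A = A`_(0,0) * A`_(1,1) - A`_(0,1) * A`_(1,0).
Proof.
rewrite {1}[A]matE (expand_det_row _ 0) !big_ord_recr big_ord0 /= /cofactor !det_mx11 !mxE /=.
rewrite expr0 expr1; ring.
Qed.
Lemma det3 (A : 'M[F]_3) : \det A =
  A`_(0,0) * (A`_(1,1) * A`_(2,2) - A`_(1,2) * A`_(2,1))
  - A`_(0,1) * (A`_(1,0) * A`_(2,2) - A`_(1,2) * A`_(2,0))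
  + A`_(0,2) * (A`_(1,0) * A`_(2,1) - A`_(1,1) * A`_(2,0)).
Proof.
rewrite {1}[A]matE (expand_det_row _ ord0) /cofactor !big_ord_recr big_ord0 /= !det2 !mxE /= !inordK // /bump /addn /=.
rewrite !expr0 !expr1 !exprS expr0; ring.
Qed.

Local Notation "A `_( i , j )" := (A (inord i) (inord j)) (at level 3).
Lemma det5 (M : 'M[F]_5) :
  M`_(0,3) = 0 -> M`_(0,4) = 0 -> M`_(1,2) = 0 -> M`_(1,3) = 0 ->
  M`_(2,1) = 0 -> M`_(2,3) = 0 -> M`_(3,0) = 0 -> M`_(3,1) = 0 ->
  M`_(3,2) = 0 -> M`_(3,4) = 0 -> M`_(4,0) = 0 -> M`_(4,3) = 0 ->
  \det M = M`_(3,3) * (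
    M`_(0,0) * (M`_(1,1) * (M`_(2,2) * M`_(4,4) - M`_(2,4) * M`_(4,2)) - M`_(1,4) * M`_(2,2) * M`_(4,1))
  - M`_(0,1) * (M`_(1,0) * (M`_(2,2) * M`_(4,4) - M`_(2,4) * M`_(4,2)) + M`_(1,4) * M`_(2,0) * M`_(4,2))
  + M`_(0,2) * (- M`_(1,0) * M`_(2,4) * M`_(4,1) - M`_(1,1) * M`_(2,0) * M`_(4,4) + M`_(1,4) * M`_(2,0) * M`_(4,1))).
Proof.
move=> z03 z04 z12 z13 z21 z23 z30 z31 z32 z34 z40 z43.
rewrite {1}[M]matE.
rewrite (expand_det_row _ (@Ordinal 5 3 isT)) /cofactor !big_ord_recr big_ord0 /=.
rewrite !mxE /= z30 z31 z32 z34 !mul0r !add0r !addr0.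
rewrite (expand_det_row _ ord0) /cofactor !big_ord_recr big_ord0 /= !mxE /= z04 !mul0r !addr0.
rewrite !det3 !mxE /= !inordK // /bump /addn /=.
rewrite ?z12 ?z13 ?z21 ?z23 ?z40 ?z43 ?z03 ?z04.
ring.
Qed.




Lemma detM (M : 'M[F]_5) (d a b K0 K1 M0 M1 e1 e2 : F) :
  M`_(0,3) = 0 -> M`_(0,4) = 0 -> M`_(1,2) = 0 -> M`_(1,3) = 0 ->
  M`_(2,1) = 0 -> M`_(2,3) = 0 -> M`_(3,0) = 0 -> M`_(3,1) = 0 ->
  M`_(3,2) = 0 -> M`_(3,4) = 0 -> M`_(4,0) = 0 -> M`_(4,3) = 0 ->
  M`_(0,0) = d -> M`_(0,1) = a -> M`_(0,2) = b -> M`_(1,0) = K0 -> M`_(1,1) = d ->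
  M`_(1,4) = M0 -> M`_(2,0) = K1 -> M`_(2,2) = d -> M`_(2,4) = M1 -> M`_(3,3) = d ->
  M`_(4,1) = e1 -> M`_(4,2) = e2 -> M`_(4,4) = d ->
  \det M = d * (d^+4 - d^+2 * (a * K0 + b * K1 + e1 * M0 + e2 * M1)
               + (K0 * M1 - M0 * K1) * (a * e2 - b * e1)).
Proof.
move=> z03 z04 z12 z13 z21 z23 z30 z31 z32 z34 z40 z43.
move=> h00 h01 h02 h10 h11 h14 h20 h22 h24 h33 h41 h42 h44.
rewrite det5 // h00 h01 h02 h10 h11 h14 h20 h22 h24 h33 h41 h42 h44; ring.
Qed.

Lemma fin (X U W D L0 Lm Lp A00 A01 A10 A11 : F) :
 U * L0 = W -> D = U^+2 - A00 -> D * (Lm + Lp) = 2 * U * W - A01 - A10 ->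
 D * (Lm * Lp) = W^+2 - A11 ->
 U^+3 * D * ((X - L0)^+3 * (X - Lm) * (X - Lp))
   = (X * U - W)^+3 * ((X * U - W)^+2 - (X^+2 * A00 - X * A01 - X * A10 + A11)).
Proof.
move=> H1 H2 H3 H4.
transitivity (U^+3 * (X - L0)^+3 * (D * X^+2 - D * (Lm + Lp) * X + D * (Lm * Lp))); first ring.
rewrite H3 H4 H2 -H1; ring.
Qed.
End G2.
Local Notation "A `_( i , j )" := (A (@inord 1 i) (@inord 1 j)) (at level 3).
Lemma GiE (R : fieldType) (G : 'M[R]_2) (i j : 'I_2) : \det G != 0 ->
  invmx G i j = (if val i == 0%N then (if val j == 0%N then G`_(1,1) else - G`_(0,1))
                 else (if val j == 0%N then - G`_(1,0) else G`_(0,0))) / \det G.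
Proof.
move=> dG; rewrite /invmx unitmxE unitfE dG !mxE /cofactor det_mx11 !mxE mulrC.
case: i => [[|[|i]] Hi] //; case: j => [[|[|j]] Hj] //=;
rewrite /addn /= ?expr0 ?expr1 ?expr2 ?mul1r ?mulN1r ?mulrNN ?mulr1;
rewrite ?opprK ?mul1r; repeat f_equal; apply: val_inj; rewrite /= inordK //.

Qed.

Lemma cp_gen (K : fieldType) n (M N : 'M[K]_n) : M \in unitmx ->
  (\det M)%:P * char_poly (invmx M *m N) = \det ('X *: map_mx polyC M - map_mx polyC N).
Proof.
move=> uM.
rewrite -det_map_mx /char_poly -det_mulmx /char_poly_mx mulmxBr mul_mx_scalar.
by rewrite map_mxM mulmxA -map_mxM mulmxV // map_mx1 mul1mx.
Qed.

Lemma o0 : (0 : 'I_2) = inord 0. Proof. by apply: val_inj; rewrite /= inordK. Qed.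
Lemma o1 : (1 : 'I_2) = inord 1. Proof. by apply: val_inj; rewrite /= inordK. Qed.
Section D.
Variable R : realType.
Local Notation V := 'rV[R]_5.

Lemma dM (f g : V -> R) x v df dg : is_derive x v f df -> is_derive x v g dg ->
  is_derive x v (fun y => f y * g y) (f x * dg + g x * df).
Proof. move=> H1 H2; exact: (@is_deriveM R V f g x v df dg H1 H2). Qed.

Lemma dD (f g : V -> R) x v df dg : is_derive x v f df -> is_derive x v g dg ->
  is_derive x v (fun y => f y + g y) (df + dg).
Proof. move=> H1 H2; exact: (@is_deriveD R V R f g x v df dg H1 H2). Qed.

Lemma dC (c : R) x v : is_derive x v (fun _ : V => c) 0.
Proof. exact: (@is_derive_cst R V R c x v). Qed.

Lemma coord_lin (k : 'I_5) : linear (fun y : V => y 0 k).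
Proof. by move=> a y z; rewrite !mxE. Qed.

Lemma dcoord (k : 'I_5) x v : is_derive x v (fun y : V => y 0 k) (v 0 k).
Proof.
pose fM := GRing.isLinear.Build _ _ _ _ _ (coord_lin k).
pose f : {linear V -> R} := HB.pack (fun y : V => y 0 k) fM.
have cf : continuous f by apply: coord_continuous.
apply: DeriveDef; first exact/diff_derivable/differentiable_coord.
rewrite deriveE; last exact: differentiable_coord.
by rewrite (_ : (fun y : V => y 0 k) = f) // diff_lin.
Qed.

Lemma ccoord (k : 'I_5) x : differentiable (fun y : V => y 0 k) x.
Proof. exact: differentiable_coord. Qed.
Lemma cM (f g : V -> R) x : differentiable f x -> differentiable g x ->
  differentiable (fun y => f y * g y) x.
Proof. move=> H1 H2; exact: (@differentiableM R V f g x H1 H2). Qed.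
Lemma cD (f g : V -> R) x : differentiable f x -> differentiable g x ->
  differentiable (fun y => f y + g y) x.
Proof. move=> H1 H2; exact: (@differentiableD R V R f g x H1 H2). Qed.
Lemma cC (c : R) x : differentiable (fun _ : V => c) x.
Proof. exact: (@differentiable_cst R V R c x). Qed.

Variable P : 'rV[R]_2 -> R.
Hypothesis dfP : forall x, differentiable P x.

Definition ptU (y : V) : 'rV[R]_2 := pt (y 0 (inord 0)) (y 0 (inord 4)).

Lemma ptE (a b : R) : pt a b = a *: delta_mx 0 0 + b *: delta_mx 0 1.
Proof.
apply/matrixP => i j; rewrite !mxE; case: j => [[|[|j]] Hj] //=; rewrite ?ord1 /=.
  by rewrite mulr1 mulr0 addr0.
by rewrite mulr1 mulr0 add0r.
Qed.

Lemma ptU_shift (h : R) (v x : V) : ptU (h *: v + x) = h *: ptU v + ptU x.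
Proof.
rewrite /ptU !ptE !mxE.
rewrite scalerDr !scalerA scalerDl scalerDl.
by rewrite -!addrA; congr (_ + _); rewrite [RHS]addrCA.
Qed.

Lemma dP x v : is_derive x v (fun y => P (ptU y))
  (v 0 (inord 0) * P_rho P (x 0 (inord 0)) (x 0 (inord 4))
   + v 0 (inord 4) * P_e P (x 0 (inord 0)) (x 0 (inord 4))).
Proof.
have E : (fun h : R => h^-1 *: (((fun y => P (ptU y)) \o shift x) (h *: v) - P (ptU x)))
   = (fun h : R => h^-1 *: ((P \o shift (ptU x)) (h *: ptU v) - P (ptU x))).
  by apply/funext => h /=; rewrite ptU_shift.
have D1 : derivable (fun y => P (ptU y)) x v.
  rewrite /derivable E; exact: diff_derivable.
apply: DeriveDef => //.
have -> : 'D_v (fun y => P (ptU y)) x = 'D_(ptU v) P (ptU x).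
  by rewrite /derive E.
rewrite deriveE // /P_rho /P_e !deriveE // /ptU.
rewrite [X in 'd P _ X]ptE linearD !linearZ /=.
by rewrite /ptU.
Qed.

Lemma cP x : differentiable (fun y => P (ptU y)) x.
Proof.
have -> : (fun y => P (ptU y)) = P \o (fun y : V => y 0 (inord 0) *: delta_mx 0 0 + y 0 (inord 4) *: (delta_mx 0 1 : 'rV[R]_2)).
  by apply/funext => y /=; rewrite /ptU ptE.
apply: differentiable_comp => //.
apply: differentiableD; apply: differentiableZl; exact: differentiable_coord.
Qed.
Lemma qc2E (G : 'M[R]_2) (y : 'rV[R]_5) : qc2 G y =
  G 0 0 * y 0 (inord 1) * y 0 (inord 1) + G 0 1 * y 0 (inord 1) * y 0 (inord 2)
  + G 1 0 * y 0 (inord 2) * y 0 (inord 1) + G 1 1 * y 0 (inord 2) * y 0 (inord 2).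
Proof.
rewrite /qc2 !big_ord_recr !big_ord0 /= /v_of /=.
have e0 : widen_ord (leqnSn 1) ord_max = 0 :> 'I_2 by apply/val_inj.
have e1 : (ord_max : 'I_2) = 1 by apply/val_inj.
rewrite e0 e1; ring.
Qed.

Variable G : 'M[R]_2.
Variable a : 'I_2.
Local Notation s := (Num.sqrt (\det G)).
Local Notation Gi := (invmx G).
Local Notation Y y k := (y 0 (@inord 4 k)).

Definition fx (i : nat) : V -> R :=
  match i with
  | 0 => fun y => Y y 0 * s * Y y a.+1
  | 1 => fun y => s * (Y y 0 * Y y 1 * Y y a.+1 + Gi 0 a * P (ptU y))
  | 2 => fun y => s * (Y y 0 * Y y 2 * Y y a.+1 + Gi 1 a * P (ptU y))
  | 3 => fun y => Y y 0 * s * Y y 3 * Y y a.+1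
  | _ => fun y => s * (Y y 0 * (Y y 4 + 2^-1 * (G 0 0 * Y y 1 * Y y 1 + G 0 1 * Y y 1 * Y y 2
          + G 1 0 * Y y 2 * Y y 1 + G 1 1 * Y y 2 * Y y 2 + Y y 3 * Y y 3)) + P (ptU y)) * Y y a.+1
  end.

Lemma fxE (i : 'I_5) : (fun y => flux G P a y 0 i) = fx i.
Proof.
apply/funext => y; rewrite /flux mxE /Etot qc2E /rho_of /v_of /V3_of /e_of /ptU.
case: i => [[|[|[|[|[|i]]]]] Hi] //=; by rewrite expr2.

Qed.

Ltac dtac := repeat first [apply: dP | apply: dcoord | apply: dM | apply: dD | apply: dC].
Ltac ctac := repeat first [apply: cP | apply: ccoord | apply: cM | apply: cD | apply: cC].

Lemma fx_diff (i : 'I_5) x : differentiable (fx i) x.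
Proof. case: i => [[|[|[|[|[|i]]]]] Hi] //=; ctac. Qed.

Lemma flux_diff x : differentiable (flux G P a) x.
Proof.
have -> : flux G P a = \sum_(i < 5) (fun y => flux G P a y 0 i *: (delta_mx 0 i : 'rV[R]_5)).
  by apply/funext => y; rewrite fct_sumE [LHS]row_sum_delta.
apply: differentiable_sum => i.
apply: differentiableZl; rewrite fxE; exact: fx_diff.
Qed.

Lemma dcoord_val (k : 'I_5) x v : 'd (fun y : V => y 0 k) x v = v 0 k.
Proof.
pose fM := GRing.isLinear.Build _ _ _ _ _ (coord_lin k).
pose f : {linear V -> R} := HB.pack (fun y : V => y 0 k) fM.
have cf : continuous f by apply: coord_continuous.
by rewrite (_ : (fun y : V => y 0 k) = f) // diff_lin.
Qed.

Lemma Amat_entry U (i j : 'I_5) :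
  Amat G P a U i j = 'D_(delta_mx 0 j) (fx i) U.
Proof.
rewrite -fxE /Amat mxE /jacobian mxE.
rewrite deriveE; last first.
  rewrite (_ : (fun y => flux G P a y 0 i) = (fun z : V => z 0 i) \o flux G P a) //.
  apply: differentiable_comp; [exact: flux_diff | exact: differentiable_coord].
rewrite (_ : (fun y => flux G P a y 0 i) = (fun z : V => z 0 i) \o flux G P a) //.
rewrite diff_comp; [|exact: flux_diff | exact: differentiable_coord].
by rewrite /= dcoord_val.
Qed.

Lemma Dval (f : V -> R) x v d : is_derive x v f d -> 'D_v f x = d.
Proof. by move=> H; rewrite derive_val. Qed.

Lemma deltaE (j : 'I_5) (k : nat) : (k < 5)%N -> (delta_mx 0 j : 'rV[R]_5) 0 (inord k) = ((k == j)%N)%:R.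
Proof. by move=> hk; rewrite mxE eqxx /= -val_eqE /= inordK. Qed.

Variable U : V.
Local Notation r := (U 0 (inord 0)).
Local Notation u1 := (U 0 (inord 1)).
Local Notation u2 := (U 0 (inord 2)).
Local Notation w3 := (U 0 (inord 3)).
Local Notation ee := (U 0 (inord 4)).
Local Notation p := (P (ptU U)).
Local Notation pr := (P_rho P (U 0 (inord 0)) (U 0 (inord 4))).
Local Notation pe := (P_e P (U 0 (inord 0)) (U 0 (inord 4))).
Local Notation va := (U 0 (inord a.+1)).

Definition bf (i j : nat) : R :=
 match i with
 | 0 => if j == 0 then va else if j == a.+1 then r else 0
 | 1 => if j == 0 then Gi 0 a * pr / r else if j == 1 then va else if j == 4 then Gi 0 a * pe / r else 0
 | 2 => if j == 0 then Gi 1 a * pr / r else if j == 2 then va else if j == 4 then Gi 1 a * pe / r else 0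
 | 3 => if j == 3 then va else 0
 | _ => if j == 4 then va else if j == a.+1 then p / r else 0
 end.

Definition qf (i j : nat) : R :=
 match i with
 | 0 => if j == 0 then 1 else 0
 | 1 => if j == 0 then u1 else if j == 1 then r else 0
 | 2 => if j == 0 then u2 else if j == 2 then r else 0
 | 3 => if j == 0 then w3 else if j == 3 then r else 0
 | _ => if j == 0 then ee + 2^-1 * (G`_(0,0) * u1 * u1 + G`_(0,1) * u1 * u2 + G`_(0,1) * u2 * u1 + G`_(1,1) * u2 * u2 + w3 * w3)
        else if j == 1 then r * (G`_(0,0) * u1 + G`_(0,1) * u2)
        else if j == 2 then r * (G`_(0,1) * u1 + G`_(1,1) * u2)
        else if j == 3 then r * w3 else r
 end.

Definition Qm : 'M[R]_5 := \matrix_(i, j) qf i j.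
Definition Bm : 'M[R]_5 := \matrix_(i, j) bf i j.

Lemma AmatE : G`_(1,0) = G`_(0,1) -> \det G != 0 -> r != 0 -> Amat G P a U = s *: (Qm *m Bm).
Proof.
move=> Gsym dG r0.
have dG' : G`_(0,0) * G`_(1,1) - G`_(0,1) * G`_(0,1) != 0 by move: dG; rewrite det2 Gsym.
apply/matrixP => i j.
rewrite Amat_entry !mxE !big_ord_recr big_ord0 /= !mxE /=.
case: i => [[|[|[|[|[|i]]]]] Hi] //=; erewrite Dval; cycle 1; try dtac.
all: case: j => [[|[|[|[|[|j]]]]] Hj] //=.
all: rewrite ?deltaE //=.
all: case: a => [[|[|a0]] Ha] //=.
all: rewrite ?GiE //= ?det2 ?o0 ?o1 ?Gsym.
all: by field; rewrite ?r0 ?dG'.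
Qed.

End D.

Lemma rowE (K : Type) n (x : 'rV[K]_n.+1) : x = \row_j x 0 (inord j).
Proof. by apply/matrixP => i j; rewrite mxE inord_val ord1. Qed.

Lemma quadE (R : realType) (G : 'M[R]_2) (x : 'rV[R]_2) :
  (x *m G *m x^T) 0 0 = x 0 (inord 0) * (x 0 (inord 0) * G`_(0,0) + x 0 (inord 1) * G`_(1,0))
     + x 0 (inord 1) * (x 0 (inord 0) * G`_(0,1) + x 0 (inord 1) * G`_(1,1)).
Proof.
rewrite [G]matE [x]rowE !mxE !big_ord_recr !big_ord0 /= !mxE !big_ord_recr !big_ord0 /= !mxE /= !inord_val; ring.
Qed.

Lemma Im_real (R : realType) (z : R[i]) : z \is Num.real -> 'Im z = 0.
Proof. by move/Creal_ImP. Qed.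
Lemma rcR (R : realType) (x : R) : (x%:C : R[i]) \is Num.real.
Proof. by rewrite realE !lecE /= eqxx /= le_total. Qed.
Lemma realIm (R : realType) (z : R[i]) : 'Im z = 0 -> z \is Num.real.
Proof. by move/Creal_ImP. Qed.
Lemma cplx (R : realType) (x : R) : x < 0 -> 'Im (sqrtC (x%:C : R[i])) != 0.
Proof.
move=> hx; apply/eqP => /realIm H.
have := @real_exprn_even_ge0 _ 2 _ H isT; rewrite sqrtCK lecE /= eqxx /=.
by rewrite leNgt hx.
Qed.

Section Main.
Variable R : realType.
Variables (G : 'M[R]_2) (P : 'rV[R]_2 -> R) (U : 'rV[R]_5).
Hypothesis spd : sym_posdef G.
Hypothesis dfP : forall x : 'rV[R]_2, differentiable P x.
Hypothesis rpos : 0 < U 0 (inord 0).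
Hypothesis Kpos : 0 < P (ptU R U) * P_e P (U 0 (inord 0)) (U 0 (inord 4))
   + U 0 (inord 0) ^+ 2 * P_rho P (U 0 (inord 0)) (U 0 (inord 4)).
Hypothesis uA : Amat G P 0 U \in unitmx.

Local Notation r := (U 0 (inord 0)).
Local Notation u := (U 0 (inord 1)).
Local Notation w2 := (U 0 (inord 2)).
Local Notation p := (P (ptU R U)).
Local Notation pr := (P_rho P (U 0 (inord 0)) (U 0 (inord 4))).
Local Notation pe := (P_e P (U 0 (inord 0)) (U 0 (inord 4))).
Local Notation c := (sound_speed P U).
Local Notation Gi := (invmx G).
Local Notation B0 := (Bm R P G 0 U).
Local Notation B1 := (Bm R P G 1 U).

Lemma Gsym : G`_(1,0) = G`_(0,1).
Proof. by case: spd => /matrixP /(_ (inord 0) (inord 1)); rewrite mxE => ->. Qed.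

Lemma gpos : 0 < \det G.
Proof.
case: spd => _ H.
have H1 := H (\row_j (if (j : nat) == 0%N then 1 else 0)).
have H2 := H (\row_j (if (j : nat) == 0%N then G`_(0,1) else - G`_(0,0))).
rewrite quadE !mxE !inordK //= in H1.
have g00 : 0 < G`_(0,0).
  suff : 0 < 1 * (1 * G`_(0,0) + 0 * G`_(1,0)) + 0 * (1 * G`_(0,1) + 0 * G`_(1,1)).
    by rewrite !mul1r !mul0r !addr0.
  apply: H1; apply/eqP => /matrixP /(_ 0 (inord 0)); rewrite !mxE inordK //=.
  by move/eqP; rewrite oner_eq0.
rewrite quadE !mxE !inordK //= in H2.
have : 0 < G`_(0,0) * \det G.
  rewrite det2 Gsym.
  have -> : G`_(0,0) * (G`_(0,0) * G`_(1,1) - G`_(0,1) * G`_(0,1)) =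
     G`_(0,1) * (G`_(0,1) * G`_(0,0) + - G`_(0,0) * G`_(1,0)) +
     - G`_(0,0) * (G`_(0,1) * G`_(0,1) + - G`_(0,0) * G`_(1,1)) by rewrite Gsym; ring.
  apply: H2; apply/eqP => /matrixP /(_ 0 (inord 1)); rewrite !mxE inordK //=.
  by move/eqP; rewrite oppr_eq0 gt_eqF.
by rewrite pmulr_rgt0.
Qed.

Lemma r0 : r != 0. Proof. by rewrite gt_eqF. Qed.
Lemma dG : \det G != 0. Proof. by rewrite gt_eqF // gpos. Qed.

Lemma c2E : c ^+ 2 = (p * pe + r ^+ 2 * pr) / r ^+ 2.
Proof. by rewrite /sound_speed /rho_of /e_of -/(ptU R U) expr_div_n sqr_sqrtr // ltW. Qed.

Lemma cpos : 0 < c.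
Proof. by rewrite /sound_speed /rho_of /e_of -/(ptU R U) divr_gt0 // sqrtr_gt0. Qed.

Lemma AbarE : Abar G P U = invmx B0 *m B1 /\ B0 \in unitmx.
Proof.
have A0 := @AmatE R P dfP G 0 U Gsym dG r0.
have A1 := @AmatE R P dfP G 1 U Gsym dG r0.
move: uA; rewrite /Abar A0 A1 !scalemxAl => uA'.
have := uA'; rewrite unitmx_mul => /andP[uQ uB0].
split => //.
set S := _ *: Qm R G U.
have E : (S *m B0) *m (invmx B0 *m invmx S) = 1%:M.
  by rewrite mulmxA -(mulmxA S) mulmxV // mulmx1 mulmxV.
rewrite -[invmx (S *m B0)]mulmx1 -E (mulmxA (invmx (S *m B0))) mulVmx // mul1mx.
by rewrite -mulmxA (mulmxA (invmx S)) mulVmx // mul1mx.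
Qed.

Lemma GiS : Gi 1 0 = Gi 0 1.
Proof. by rewrite !GiE ?dG //= Gsym. Qed.

Lemma detB0 : \det B0 = u ^+ 3 * (u ^+ 2 - Gi 0 0 * c ^+ 2).
Proof.
rewrite (@detM _ _ u r 0 (Gi 0 0 * pr / r) (Gi 1 0 * pr / r) (Gi 0 0 * pe / r) (Gi 1 0 * pe / r) (p / r) 0);
  try by rewrite /Bm mxE !inordK.
rewrite c2E; field; exact: r0.
Qed.


Local Notation L0 := (((w2 / u)%:C : R[i])).
Local Notation num := (((u * w2 - c ^+ 2 * Gi 0 1)%:C : R[i])).
Local Notation rt := (((c / Num.sqrt (\det G))%:C * sqrtC ((qc2 G U - c ^+ 2)%:C) : R[i])).
Local Notation den := (((u ^+ 2 - Gi 0 0 * c ^+ 2)%:C : R[i])).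
Local Notation Lm := ((num - rt) / den).
Local Notation Lp := ((num + rt) / den).

Lemma nz : u != 0 /\ (u ^+ 2 - Gi 0 0 * c ^+ 2) != 0.
Proof.
have := (AbarE).2; rewrite unitmxE unitfE detB0 mulf_eq0 negb_or expf_eq0 /=.
by move=> /andP[].
Qed.

Lemma rc_neq0 (x : R) : x != 0 -> (x%:C : R[i]) != 0.
Proof. by apply: contra => /eqP; rewrite -(rmorph0 (real_complex R)) => /complexI ->. Qed.

Lemma Hrt : rt * rt = ((c ^+ 2 / \det G) * (qc2 G U - c ^+ 2))%:C.
Proof.
transitivity (((c / Num.sqrt (\det G)) ^+ 2)%:C * (sqrtC ((qc2 G U - c ^+ 2)%:C)) ^+ 2); first by ring.
rewrite sqrtCK expr_div_n sqr_sqrtr ?(ltW gpos) //; ring.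
Qed.

Lemma sg0 : Num.sqrt (\det G) != 0.
Proof. by rewrite gt_eqF // sqrtr_gt0 gpos. Qed.

Lemma H1c (w : R) : u%:C * (w%:C * L0) = (w * w2)%:C.
Proof. have [u0 _] := nz; field; by rewrite fmorph_eq0. Qed.

Lemma H3c (w : R) : den * (w%:C * Lm + w%:C * Lp) =
  2 * u%:C * (w * w2)%:C - (w * (Gi 0 1 * c ^+ 2))%:C - (w * (Gi 1 0 * c ^+ 2))%:C.
Proof.
have [_ d0] := nz; rewrite GiS; field.
by rewrite -?rmorphXn -?rmorphM -?rmorphB !fmorph_eq0 d0 sg0.
Qed.

Lemma H4c (w : R) : den * ((w%:C * Lm) * (w%:C * Lp)) =
  (w * w2)%:C ^+ 2 - (w ^+ 2 * (Gi 1 1 * c ^+ 2))%:C.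
Proof.
have [_ d0] := nz.
transitivity ((w%:C) ^+ 2 * (num * num - rt * rt) / den).
  field.
  by rewrite -?rmorphXn -?rmorphM -?rmorphB !fmorph_eq0 d0 ?sg0.
rewrite Hrt.
have dG' : G`_(0,0) * G`_(1,1) - G`_(0,1) * G`_(0,1) != 0 by move: dG; rewrite det2 Gsym.
move: d0; rewrite qc2E !GiE ?dG //= !det2 ?o0 ?o1 !Gsym => d0.
have d0' : u ^+ 2 * (G`_(0,0) * G`_(1,1) - G`_(0,1) * G`_(0,1)) - G`_(1,1) * c ^+ 2 != 0.
  have -> : u ^+ 2 * (G`_(0,0) * G`_(1,1) - G`_(0,1) * G`_(0,1)) - G`_(1,1) * c ^+ 2 =
    (G`_(0,0) * G`_(1,1) - G`_(0,1) * G`_(0,1)) * (u ^+ 2 - G`_(1,1) / (G`_(0,0) * G`_(1,1) - G`_(0,1) * G`_(0,1)) * c ^+ 2)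
    by field.
  by rewrite mulf_neq0.
field.
do 6 (rewrite -?rmorphXn -?rmorphM -?rmorphB).
by rewrite !fmorph_eq0 dG' d0'.
Qed.

Local Notation pc x := (((x)%:C)%:P : {poly R[i]}).

Lemma Ek (i j : 'I_2) : r * (Gi i j * pr / r) + p / r * (Gi i j * pe / r) = Gi i j * c ^+ 2.
Proof. rewrite c2E; field; exact: r0. Qed.

Lemma EAgen (w rr qq x00 x01 x10 x11 y00 y01 y10 y11 a00 a01 a10 a11 : R) :
  rr * x00 + qq * y00 = a00 -> rr * x01 + qq * y01 = a01 ->
  rr * x10 + qq * y10 = a10 -> rr * x11 + qq * y11 = a11 ->
  'X * pc rr * ('X * pc x00 - pc (w * x01)) + - pc (w * rr) * ('X * pc x10 - pc (w * x11))
  + 'X * pc qq * ('X * pc y00 - pc (w * y01)) + - pc (w * qq) * ('X * pc y10 - pc (w * y11))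
  = 'X ^+ 2 * pc a00 - 'X * pc (w * a01) - 'X * pc (w * a10) + pc (w ^+ 2 * a11).
Proof. move=> <- <- <- <-; ring. Qed.

Lemma cpw (w : R) : char_poly (cmx (w *: Abar G P U)) =
  ('X - (w%:C * L0)%:P) ^+ 3 * ('X - (w%:C * Lm)%:P) * ('X - (w%:C * Lp)%:P).
Proof.
have [AE uB0] := AbarE.
have [u0 d0] := nz.
rewrite AE scalemxAr /cmx map_mxM map_invmx.
have uC : map_mx (real_complex R) B0 \in unitmx by rewrite map_unitmx.
apply: (@mulfI _ (pc (\det B0))).
  by rewrite polyC_eq0 fmorph_eq0 detB0 mulf_neq0 // expf_neq0.
rewrite -det_map_mx cp_gen // det_map_mx detB0.
rewrite (@detM _ _ ('X * pc u - pc (w * w2)) ('X * pc r) (- pc (w * r))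
   ('X * pc (Gi 0 0 * pr / r) - pc (w * (Gi 0 1 * pr / r)))
   ('X * pc (Gi 1 0 * pr / r) - pc (w * (Gi 1 1 * pr / r)))
   ('X * pc (Gi 0 0 * pe / r) - pc (w * (Gi 0 1 * pe / r)))
   ('X * pc (Gi 1 0 * pe / r) - pc (w * (Gi 1 1 * pe / r)))
   ('X * pc (p / r)) (- pc (w * (p / r))));
  try by rewrite !mxE !inordK //=; ring.
rewrite (@EAgen w _ _ _ _ _ _ _ _ _ _ _ _ _ _ (Ek 0 0) (Ek 0 1) (Ek 1 0) (Ek 1 1)).
have EZ : 'X * pc r * - pc (w * (p / r)) - - pc (w * r) * ('X * pc (p / r)) = 0 by ring.
rewrite EZ mulr0 addr0.
have H1 : pc u * (w%:C * L0)%:P = pc (w * w2) by rewrite -polyCM H1c.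
have H2 : pc (u ^+ 2 - Gi 0 0 * c ^+ 2) = pc u ^+ 2 - pc (Gi 0 0 * c ^+ 2) by ring.
have H3 : pc (u ^+ 2 - Gi 0 0 * c ^+ 2) * ((w%:C * Lm)%:P + (w%:C * Lp)%:P) =
    2 * pc u * pc (w * w2) - pc (w * (Gi 0 1 * c ^+ 2)) - pc (w * (Gi 1 0 * c ^+ 2)).
  transitivity ((den * (w%:C * Lm + w%:C * Lp))%:P); first by ring.
  rewrite H3c; ring.
have H4 : pc (u ^+ 2 - Gi 0 0 * c ^+ 2) * ((w%:C * Lm)%:P * (w%:C * Lp)%:P) =
    pc (w * w2) ^+ 2 - pc (w ^+ 2 * (Gi 1 1 * c ^+ 2)).
  transitivity ((den * ((w%:C * Lm) * (w%:C * Lp)))%:P); first by ring.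
  rewrite H4c; ring.
have F := @fin _ 'X _ _ _ _ _ _ _ _ _ _ H1 H2 H3 H4.
transitivity (pc u ^+ 3 * pc (u ^+ 2 - Gi 0 0 * c ^+ 2) *
  (('X - (w%:C * L0)%:P) ^+ 3 * ('X - (w%:C * Lm)%:P) * ('X - (w%:C * Lp)%:P))); last by ring.
rewrite F; ring.
Qed.







Lemma eig_roots (w : R) z : is_eigenvalue (w *: Abar G P U) z ->
  [\/ z = w%:C * L0, z = w%:C * Lm | z = w%:C * Lp].
Proof.
rewrite /is_eigenvalue cpw !rootM !root_XsubC !orbb.
by move=> /orP[/orP[]|] /eqP ->; constructor.
Qed.

Lemma notdist (w : R) : ~ eig_distinct (w *: Abar G P U).
Proof.
move=> H.
have hr : is_eigenvalue (w *: Abar G P U) (w%:C * L0).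
  rewrite /is_eigenvalue cpw rootM; apply/orP; left; rewrite rootM; apply/orP; left.
  by rewrite root_exp_XsubC.
move: (H _ hr); rewrite cpw => /negP; apply.
apply: dvdp_mulr; apply: dvdp_mulr; rewrite exprS; apply: dvdp_mull; exact: dvdpp.
Qed.

Lemma allreal (w : R) : c < Num.sqrt (qc2 G U) -> all_eig_real (w *: Abar G P U).
Proof.
move=> hc.
have qpos : 0 < qc2 G U by rewrite -sqrtr_gt0 (lt_trans cpos hc).
have e := sqr_sqrtr (ltW qpos).
have cp := cpos.
have hx : c ^+ 2 < qc2 G U by nra.
have Sr : sqrtC ((qc2 G U - c ^+ 2)%:C) \is Num.real.
  by apply: ger0_real; rewrite sqrtC_ge0 lecE /= eqxx /= subr_ge0 ltW.
move=> z hz; case: (@eig_roots w z hz) => -> ; apply: Im_real;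
  by repeat first [exact: Lr | exact: rtr | exact: Sr | apply: (@rcR R) | apply: realM | apply: realB | apply: realD | rewrite realV].
Qed.



Lemma ellip : Num.sqrt (qc2 G U) < c -> Im (1%:C * Lp) != 0.
Proof.
move=> hc.
have cp := cpos.
have hx : qc2 G U - c ^+ 2 < 0.
  rewrite subr_lt0; have [q0|q0] := ltP (qc2 G U) 0; first by nra.
  have e := sqr_sqrtr q0; have := sqrtr_ge0 (qc2 G U); nra.
have [_ d0] := nz.
apply/eqP => /realIm; rewrite rmorph1 mul1r => Lr.
have rtr : rt \is Num.real.
  have -> : rt = Lp * den - num.
    field; do 4 (rewrite -?rmorphXn -?rmorphM -?rmorphB).
    by rewrite !fmorph_eq0 d0 sg0.
  by repeat first [exact: Lr | exact: rtr | exact: Sr | apply: (@rcR R) | apply: realM | apply: realB | apply: realD | rewrite realV].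
have : sqrtC ((qc2 G U - c ^+ 2)%:C) \is Num.real.
  have -> : sqrtC ((qc2 G U - c ^+ 2)%:C) = rt / (c / Num.sqrt (\det G))%:C.
    by field; rewrite !fmorph_eq0 sg0 (gt_eqF cp).
  by repeat first [exact: Lr | exact: rtr | exact: Sr | apply: (@rcR R) | apply: realM | apply: realB | apply: realD | rewrite realV].
by move=> /Im_real /eqP; apply/negP; apply: cplx.
Qed.


End Main.

Theorem mainTheorem3 (R : realType) (G : 'M[R]_2) (P : 'rV[R]_2 -> R)
    (U : 'rV[R]_5) :
  sym_posdef G ->
  (forall x : 'rV[R]_2, differentiable P x) ->
  0 < rho_of U ->
  0 < P (pt (rho_of U) (e_of U)) * P_e P (rho_of U) (e_of U)
      + rho_of U ^+ 2 * P_rho P (rho_of U) (e_of U) ->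
  Amat G P 0 U \in unitmx ->
  let c := sound_speed P U in
  let g := \det G in
  let Gi := invmx G in
  let v1 := v_of U 0 in
  let v2 := v_of U 1 in
  let qc := Num.sqrt (qc2 G U) in
  let lam0 : R[i] := (v2 / v1)%:C in
  let num : R[i] := (v1 * v2 - c ^+ 2 * Gi 0 1)%:C in
  let rt : R[i] := (c / Num.sqrt g)%:C * sqrtC ((qc2 G U - c ^+ 2)%:C) in
  let den : R[i] := (v1 ^+ 2 - Gi 0 0 * c ^+ 2)%:C in
  let lamm : R[i] := (num - rt) / den in
  let lamp : R[i] := (num + rt) / den in
  char_poly (cmx (Abar G P U))
    = ('X - lam0%:P) ^+ 3 * ('X - lamm%:P) * ('X - lamp%:P)
  /\ ~ strictly_hyperbolic (Abar G P U)
  /\ (c < qc -> nonstrictly_hyperbolic (Abar G P U))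
  /\ (qc < c -> elliptic (Abar G P U)).
Proof.
move=> spd dfP rpos Kpos uA c g Gi v1 v2 qc lam0 num rt den lamm lamp.
have H := @cpw R G P U spd dfP rpos Kpos uA.
have ND := @notdist R G P U spd dfP rpos Kpos uA.
have AR := @allreal R G P U spd dfP rpos Kpos uA.
have EL := @ellip R G P U spd dfP rpos Kpos uA.
split.
  by have := H 1; rewrite scale1r rmorph1 !mul1r.
split.
  by move=> Hs; have [_ Hd] := Hs 1 (normr1 _); exact: (ND 1 Hd).
split.
  by move=> hc w hw; split; [exact: AR | exact: ND].
move=> hc; exists 1; split; first exact: normr1.
exists (1%:C * lamp); split; last exact: EL hc.
rewrite /is_eigenvalue H rootM; apply/orP; right; by rewrite root_XsubC.
Qed.
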